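(* Let $n\ge3$, let $\mathcal{M}\subseteq\{1,\dots,n\}$ be a sample set with sampling matrix $A=\mathbf{I}_{\mathcal{M}}$, let $y\in\mathbb{R}^{|\mathcal{M}|}$ (indexed by $\mathcal{M}$) be measurements of the form $y=Az^\diamond+\eta$ with $\|\eta\|_\infty\le\varepsilon$ and $\varepsilon>0$. Let $z\in\mathbb{R}^n$ be feasible for $\min_{z'}\|Dz'\|_1$ subject to $\|Az'-y\|_\infty\le\varepsilon$. Define the active set $\mathcal{A}=\{i\in\mathcal{M}: |y_i-z_i|=\varepsilon\}$, its subsets $\mathcal{A}_\uparrow=\{i\in\mathcal{M}: y_i-z_i=\varepsilon\}$ and $\mathcal{A}_\downarrow=\{i\in\mathcal{M}: y_i-z_i=-\varepsilon\}$, and $\bar{\mathcal{A}}=\mathcal{M}\setminus\mathcal{A}$. Then $z$ is a minimizer of this problem if and only if there exists $u\in\mathbb{R}^{n-2}$ such that $$(D^{\mathsf{T}})_{\overline{\mathcal{M}}\cup\bar{\mathcal{A}}}\,u=\mathbf{0},\quad u_{\mathcal{I}}=\mathrm{sign}(Dz)_{\mathcal{I}},\quad \|u\|_\infty\le1,\quad (D^{\mathsf{T}})_{\mathcal{A}_\uparrow}u\ge\mathbf{0},\quad (D^{\mathsf{T}})_{\mathcal{A}_\downarrow}u\le\mathbf{0},$$ where $\mathcal{I}$ is the set of indices of the nonzero entries of $Dz$ and $\overline{\mathcal{M}}=\{1,\dots,n\}\setminus\mathcal{M}$ (inequalities entrywise).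
   Context: $D\in\mathbb{R}^{(n-2)\times n}$ is the second-order difference operator with $k$-th row having entries $1,-2,1$ in columns $k,k+1,k+2$. $\mathbf{I}_{\mathcal{M}}$ consists of the rows of the identity indexed by $\mathcal{M}$, so $Az=z_{\mathcal{M}}$. For a matrix $M$ and index set $\mathcal{S}$, $M_{\mathcal{S}}$ denotes the rows of $M$ indexed by $\mathcal{S}$; $v_{\mathcal{S}}$ denotes the subvector of $v$. $\mathrm{sign}$ is entrywise with $\mathrm{sign}(0)=0$. *)

(* Defs.v *)
From mathcomp Require Import all_boot all_order all_algebra.
Set Implicit Arguments. Unset Strict Implicit. Unset Printing Implicit Defensive.
Import Order.TTheory GRing.Theory Num.Theory.
Local Open Scope ring_scope.

Definition D2 (R : numDomainType) (n : nat) : 'M[R]_(n - 2, n) :=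
  \matrix_(k < n - 2, j < n)
    (if (j == k :> nat) then 1
     else if (j == k.+1 :> nat) then -2
     else if (j == k.+2 :> nat) then 1 else 0).

Definition tv2 (R : numDomainType) (n : nat) (z : 'cV[R]_n) : R :=
  \sum_(k < n - 2) `|(D2 R n *m z) k 0|.

(* feasibility: ||A z - y||_oo <= eps, with A = I_M, y indexed by M *)
Definition feasible (R : numDomainType) (n : nat) (M : {set 'I_n})
  (y : 'I_n -> R) (eps : R) (z : 'cV[R]_n) : Prop :=
  forall i, i \in M -> `|z i 0 - y i| <= eps.

Definition is_minimizer (R : numDomainType) (n : nat) (M : {set 'I_n})
  (y : 'I_n -> R) (eps : R) (z : 'cV[R]_n) : Prop :=
  feasible M y eps z /\
  forall z' : 'cV[R]_n, feasible M y eps z' -> tv2 z <= tv2 z'.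

(* Main.v *)
Require Import Defs.
From mathcomp Require Import all_boot all_order all_algebra.
From mathcomp Require Import ring lra.
From Stdlib Require List.
Set Implicit Arguments. Unset Strict Implicit. Unset Printing Implicit Defensive.
Import Order.TTheory GRing.Theory Num.Theory.
Local Open Scope ring_scope.



Lemma finmin (R : realFieldType) (T : finType) (P : pred T) (f : T -> R) :
  (forall i, P i -> 0 < f i) -> exists d, 0 < d /\ forall i, P i -> d <= f i.
Proof.
move=> H.
suff H2 : forall s : seq T, exists d, 0 < d /\ forall i, i \in s -> P i -> d <= f i.
  have [d [hd Hd]] := H2 (enum T).
  by exists d; split => // i; apply: Hd; rewrite mem_enum.
elim=> [|a s [d [hd Hd]]]; first by exists 1; split.
case hPa: (P a).
  exists (Num.min d (f a)); split; first by rewrite lt_min hd H.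
  move=> i; rewrite in_cons => /orP [/eqP -> _|his hPi]; first by rewrite ge_min lexx orbT.
  by rewrite ge_min Hd.
exists d; split => // i; rewrite in_cons => /orP [/eqP ->|his hPi]; first by rewrite hPa.
exact: Hd.
Qed.

Lemma le_sum1 (R : realFieldType) (T : finType) (f : T -> R) i :
  (forall j, 0 <= f j) -> f i <= \sum_j f j.
Proof.
by move=> H; rewrite (bigD1 i) //= lerDl sumr_ge0.
Qed.

Lemma In_enum (T : finType) (x : T) : List.In x (enum T).
Proof.
have : x \in enum T by rewrite mem_enum.
elim: (enum T) => [//|a s IH]; rewrite in_cons => /orP [/eqP ->|/IH h] /=.
  by left.
by right.
Qed.

Lemma dual_id (R : realFieldType) m n (D : 'M[R]_(m, n)) (u : 'cV[R]_m) (w : 'cV[R]_n) :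
  \sum_k u k 0 * (D *m w) k 0 = \sum_j (D^T *m u) j 0 * w j 0.
Proof.
under eq_bigr do rewrite mxE mulr_sumr.
under [RHS]eq_bigr do rewrite mxE mulr_suml.
rewrite exchange_big /=; apply: eq_bigr => j _; apply: eq_bigr => k _.
by rewrite mxE; ring.
Qed.

Lemma ord_eq_nat m (i k : 'I_m) : ((i : nat) == (k : nat)) = (i == k).
Proof. by []. Qed.


Definition cstr (R : realFieldType) := ((nat -> R) * R)%type.
Definition cadd (R : realFieldType) (c1 c2 : cstr R) : cstr R :=
  (fun i => c1.1 i + c2.1 i, c1.2 + c2.2).
Definition cscale (R : realFieldType) (t : R) (c : cstr R) : cstr R :=
  (fun i => t * c.1 i, t * c.2).
Inductive incone (R : realFieldType) (S : list (cstr R)) : cstr R -> Prop :=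
| ic_mem c : List.In c S -> incone S c
| ic_add c1 c2 : incone S c1 -> incone S c2 -> incone S (cadd c1 c2)
| ic_scale t c : 0 <= t -> incone S c -> incone S (cscale t c).

Definition dot (R : realFieldType) (p : nat) (a x : nat -> R) :=
  \sum_(i < p) a i * x i.

Lemma incone_mono (R : realFieldType) (S S' : list (cstr R)) c :
  (forall c', List.In c' S' -> incone S c') -> incone S' c -> incone S c.
Proof.
move=> H; elim=> [c0 /H //| c1 c2 _ h1 _ h2 | t c0 ht _ h].
- exact: ic_add.
- exact: ic_scale.
Qed.

Lemma lower_bound (R : realFieldType) (Us : list R) :
  exists t, forall u, List.In u Us -> t <= u.
Proof.
elim: Us => [|u Us [t Ht]]; first by exists 0.
exists (Num.min u t) => v /= [<-|/Ht]; first by rewrite ge_min lexx.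
by move=> h; rewrite ge_min h orbT.
Qed.

Lemma between (R : realFieldType) (Ls Us : list R) :
  (forall l u, List.In l Ls -> List.In u Us -> l <= u) ->
  exists t, (forall l, List.In l Ls -> l <= t) /\ (forall u, List.In u Us -> t <= u).
Proof.
elim: Ls => [|l Ls IH] H.
  by have [t Ht] := lower_bound Us; exists t.
have [|t [H1 H2]] := IH.
  by move=> l' u hl hu; apply: H => //=; right.
exists (Num.max l t); split.
  by move=> l' /= [<-|/H1 h]; rewrite le_max ?lexx // h orbT.
by move=> u hu; rewrite ge_max H2 // andbT; apply: H => //=; left.
Qed.

Lemma dot_lin (R : realFieldType) p (a b x : nat -> R) s t :
  dot p (fun i => s * a i + t * b i) x = s * dot p a x + t * dot p b x.
Proof.
rewrite /dot !mulr_sumr -big_split /=; apply: eq_bigr => i _; ring.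
Qed.

Lemma fm (R : realFieldType) (p : nat) : forall S : list (cstr R),
  (forall a b, incone S (a, b) -> (forall i, (i < p)%N -> a i = 0) -> 0 <= b) ->
  exists x, forall c, List.In c S -> dot p c.1 x <= c.2.
Proof.
elim: p => [|p IH] S H.
  exists (fun _ => 0) => [[a b]] hc; rewrite /dot big_ord0 /=.
  by apply: (H a b) => //; apply: ic_mem.
pose sig (c : cstr R) := c.1 p.
pose Z := List.filter (fun c => sig c == 0) S.
pose P := List.filter (fun c => 0 < sig c) S.
pose N := List.filter (fun c => sig c < 0) S.
pose comb c e := cadd (cscale (- sig e) c) (cscale (sig c) e).
pose S' := Z ++ List.flat_map (fun c => List.map (comb c) N) P.
have HS' : forall c', List.In c' S' -> incone S c' /\ sig c' = 0.
  move=> c'; rewrite List.in_app_iff List.in_flat_map.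
  case=> [/List.filter_In [hin /eqP h]|[c [/List.filter_In [hc hcp]]]].
    by split=> //; apply: ic_mem.
  move=> /List.in_map_iff [e [<- /List.filter_In [he hen]]].
  split.
    apply: ic_add; apply: ic_scale; try (apply: ic_mem => //).
      by rewrite oppr_ge0 ltW.
    by rewrite ltW.
  rewrite /comb /cadd /cscale /sig /=; ring.
have [x' Hx'] : exists x', forall c, List.In c S' -> dot p c.1 x' <= c.2.
  apply: IH => a b hab ha.
  have hp : a p = 0.
    have : forall c, incone S' c -> sig c = 0.
      move=> c; elim=> [c0 /HS' [] //| c1 c2 _ h1 _ h2| t c0 _ _ h].
        by rewrite /sig /cadd /= -/(sig c1) -/(sig c2) h1 h2 addr0.
      by rewrite /sig /cscale /= -/(sig c0) h mulr0.
    by move=> /(_ _ hab).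
  apply: (H a b).
    apply: (incone_mono _ hab) => c' /HS' []; done.
  by move=> i; rewrite ltnS leq_eqVlt => /orP [/eqP -> //|]; apply: ha.
pose U c := (c.2 - dot p c.1 x') / sig c.
have [|t [Ht1 Ht2]] := @between R (List.map U N) (List.map U P).
  move=> l u /List.in_map_iff [e [<- /List.filter_In [he hen]]]
    /List.in_map_iff [c [<- /List.filter_In [hc hcp]]].
  have hcomb : List.In (comb c e) S'.
    apply/List.in_app_iff; right; apply/List.in_flat_map; exists c.
    split; first by apply/List.filter_In.
    by apply: List.in_map; apply/List.filter_In.
  have := Hx' _ hcomb.
  rewrite /comb /cadd /cscale /= dot_lin.
  have Ue : sig e * U e = e.2 - dot p e.1 x'.
    by rewrite /U mulrCA mulfV ?mulr1 // ltr0_neq0.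
  have Uc : sig c * U c = c.2 - dot p c.1 x'.
    by rewrite /U mulrCA mulfV ?mulr1 // gt_eqF.
  move=> h.
  have h2 : 0 <= (sig c * - sig e) * (U c - U e).
    have -> : (sig c * - sig e) * (U c - U e) = - sig e * (sig c * U c) + sig c * (sig e * U e).
      ring.
    rewrite Ue Uc; lra.
  rewrite -subr_ge0; move: h2; rewrite pmulr_rge0 //.
  by rewrite mulr_gt0 // oppr_gt0.
exists (fun i => if (i < p)%N then x' i else t) => c hc.
have -> : dot p.+1 c.1 (fun i => if (i < p)%N then x' i else t) = dot p c.1 x' + sig c * t.
  rewrite /dot big_ord_recr /= ltnn; congr (_ + _).
  by apply: eq_bigr => i _; rewrite ltn_ord.
case: (ltrgtP (sig c) 0) => hs.
- have hu : U c <= t.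
    by apply: Ht1; apply: List.in_map; apply/List.filter_In.
  have : sig c * t <= sig c * U c by rewrite ler_wnM2l // ltW.
  rewrite /U mulrCA mulfV ?mulr1 ?ltr0_neq0 //; lra.
- have hu : t <= U c.
    by apply: Ht2; apply: List.in_map; apply/List.filter_In.
  have : sig c * t <= sig c * U c by rewrite ler_wpM2l // ltW.
  rewrite /U mulrCA mulfV ?mulr1 ?gt_eqF //; lra.
- rewrite hs mul0r addr0.
  have : List.In c S' by apply/List.in_app_iff; left; apply/List.filter_In; rewrite hs eqxx.
  by move/Hx'.
Qed.


Definition gfun (R : realFieldType) (w v : R) : R :=
  if w != 0 then Num.sg w * v else `|v|.

Lemma gfun_split (R : realFieldType) (w v c : R) :
  0 < c -> (w != 0 -> c * `|v| <= `|w|) -> `|w + c * v| = `|w| + c * gfun w v.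
Proof.
move=> hc H; rewrite /gfun; case: (boolP (w != 0)) => hw.
  have hs : `|Num.sg w| = 1 by rewrite normr_sg hw.
  have h1 : - `|v| <= Num.sg w * v.
    have := lexx `|Num.sg w * v|; rewrite {1}ler_norml normrM hs mul1r.
    by case/andP.
  have h2 := H hw.
  have h3 : 0 <= Num.sg w * (w + c * v).
    rewrite mulrDr -normrEsg mulrCA; nra.
  rewrite -[LHS]mul1r -hs -normrM ger0_norm // mulrDr -normrEsg; ring.
move: hw; rewrite negbK => /eqP ->; rewrite normr0 add0r normrM gtr0_norm //; ring.
Qed.

Lemma dir (R : realFieldType) n (M : {set 'I_n}) (y : 'I_n -> R) (eps : R)
  (z d : 'cV[R]_n) (heps : 0 < eps) (hmin : is_minimizer M y eps z)
  (hup : forall j, j \in M -> y j - z j 0 = eps -> 0 <= d j 0)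
  (hdn : forall j, j \in M -> y j - z j 0 = - eps -> d j 0 <= 0) :
  0 <= \sum_(k < n - 2) gfun ((D2 R n *m z) k 0) ((D2 R n *m d) k 0).
Proof.
case: hmin => hz hmin.
set D := D2 R n.
have [d1 [hd1 Hd1]] := @finmin R _ (fun j : 'I_n => (j \in M) && (`|z j 0 - y j| < eps))
   (fun j => eps - `|z j 0 - y j|) ltac:(by move=> j /andP [_ h]; rewrite subr_gt0).
have [d2 [hd2 Hd2]] := @finmin R _ (fun k : 'I_(n - 2) => (D *m z) k 0 != 0)
   (fun k => `|(D *m z) k 0|) ltac:(by move=> k h; rewrite normr_gt0).
pose del := Num.min (Num.min d1 d2) eps.
have hdel : 0 < del by rewrite /del !lt_min hd1 hd2 heps.
have del1 : del <= d1 by rewrite /del !ge_min lexx.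
have del2 : del <= d2 by rewrite /del !ge_min lexx orbT.
have del3 : del <= eps by rewrite /del !ge_min lexx !orbT.
pose B := 1 + \sum_j `|d j 0| + \sum_k `|(D *m d) k 0|.
have hB0 : 0 < B by rewrite /B -addrA ltr_pwDl // addr_ge0 // sumr_ge0.
have hBd : forall j, `|d j 0| <= B.
  move=> j; rewrite /B -addrA addrC ler_wpDr //.
  rewrite ler_wpDr ?sumr_ge0 //.
  by apply: (@le_sum1 _ _ (fun j => `|d j 0|)).
have hBD : forall k, `|(D *m d) k 0| <= B.
  move=> k; rewrite /B ler_wpDl //.
    by rewrite addr_ge0 // sumr_ge0.
  by apply: (@le_sum1 _ _ (fun k => `|(D *m d) k 0|)).
pose c := del / B.
have hc : 0 < c by rewrite divr_gt0.
have hcB : c * B = del by rewrite /c divfK // (gt_eqF hB0).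
have hcd : forall j, c * `|d j 0| <= del.
  by move=> j; rewrite -hcB ler_wpM2l // ltW.
have hcD : forall k, c * `|(D *m d) k 0| <= del.
  by move=> k; rewrite -hcB ler_wpM2l // ltW.
pose z' := z + c *: d.
have hz' : feasible M y eps z'.
  move=> j hj; rewrite /z' !mxE.
  have hzj := hz j hj.
  have hcdj := hcd j.
  have habs : - (c * `|d j 0|) <= c * d j 0 <= c * `|d j 0|.
    by rewrite -ler_norml normrM gtr0_norm.
  case: (eqVneq (y j - z j 0) eps) => h1.
    have := hup j hj h1; move: habs; rewrite ler_norml => /andP [ha hb] hdj.
    have : 0 <= c * d j 0 by rewrite mulr_ge0 // ltW.
    lra.
  case: (eqVneq (y j - z j 0) (- eps)) => h2.
    have := hdn j hj h2; move: habs; rewrite ler_norml => /andP [ha hb] hdj.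
    have : c * d j 0 <= 0 by rewrite pmulr_rle0.
    lra.
  have hlt : `|z j 0 - y j| < eps.
    rewrite lt_neqAle hzj andbT; apply/eqP => h.
    move: h; case: (ger0P (z j 0 - y j)) => _ h.
      by move: h2; rewrite -h opprB eqxx.
    by move: h1; rewrite -h !opprB eqxx.
  have := Hd1 j; rewrite hj hlt /= => /(_ isT) hd1j.
  rewrite (_ : z j 0 + c * d j 0 - y j = (z j 0 - y j) + c * d j 0); last by ring.
  apply: (le_trans (ler_normD _ _)); rewrite normrM gtr0_norm //; lra.
have := hmin z' hz'.
rewrite /tv2 -/D.
have -> : \sum_(k < n - 2) `|(D *m z') k 0| =
   \sum_(k < n - 2) `|(D *m z) k 0| + c * \sum_(k < n - 2) gfun ((D *m z) k 0) ((D *m d) k 0).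
  rewrite mulr_sumr -big_split /=; apply: eq_bigr => k _.
  have e : forall (A1 A2 : 'cV[R]_(n - 2)), (A1 + c *: A2) k 0 = A1 k 0 + c * A2 k 0.
    by move=> A1 A2; rewrite !mxE.
  rewrite /z' mulmxDr -scalemxAr e; apply: gfun_split => // hk.
  by apply: (le_trans (hcD k)); apply: le_trans del2 _; apply: Hd2.
rewrite lerDl pmulr_rge0 //.
Qed.


Lemma gfun0 (R : realFieldType) (w : R) : gfun w 0 = 0.
Proof. by rewrite /gfun mulr0 normr0; case: ifP. Qed.

Lemma gfun_sub4 (R : realFieldType) (w a1 a2 b1 b2 : R) :
  gfun w (a1 + a2 + (b1 + b2)) <= gfun w (a1 + b1) + gfun w (a2 + b2).
Proof.
rewrite /gfun; case: ifP => _.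
  have -> : Num.sg w * (a1 + a2 + (b1 + b2)) = Num.sg w * (a1 + b1) + Num.sg w * (a2 + b2) by ring.
  exact: lexx.
rewrite (_ : a1 + a2 + (b1 + b2) = (a1 + b1) + (a2 + b2)); last by ring.
exact: ler_normD.
Qed.

Lemma gfun_scale (R : realFieldType) (w t a b : R) :
  0 <= t -> gfun w (t * a + t * b) = t * gfun w (a + b).
Proof.
move=> ht; rewrite /gfun -mulrDr; case: ifP => _; first by ring.
by rewrite normrM ger0_norm.
Qed.

Lemma sum_single (R : realFieldType) m (f : 'I_m -> R -> R) (k : 'I_m) (v : R) :
  (forall i, f i 0 = 0) ->
  \sum_(i < m) f i (if (i : nat) == (k : nat) then v else 0) = f k v.
Proof.
move=> H; rewrite (bigD1 k) //= eqxx big1 ?addr0 // => i hi.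
by rewrite ord_eq_nat (negbTE hi) H.
Qed.

Lemma dot_single (R : realFieldType) m (x : nat -> R) (k : 'I_m) (v : R) :
  dot m (fun i => if i == k then v else 0) x = v * x k.
Proof.
rewrite /dot (bigD1 k) //= eqxx big1 ?addr0 // => i hi.
by rewrite ord_eq_nat (negbTE hi) mul0r.
Qed.

Lemma ecol_mul (R : realFieldType) m n (D : 'M[R]_(m, n)) (c : R) (j : 'I_n) k :
  (D *m \col_i (if i == j then c else 0)) k 0 = c * D k j.
Proof.
rewrite mxE (bigD1 j) //= mxE eqxx big1 ?addr0; first by rewrite mulrC.
by move=> i hi; rewrite mxE (negbTE hi) mulr0.
Qed.

Theorem proposition7 (R : realFieldType) (n : nat) (hn : (3 <= n)%N)
  (M : {set 'I_n}) (y : 'I_n -> R) (zd eta : 'I_n -> R) (eps : R)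
  (heps : 0 < eps)
  (hy : forall i, i \in M -> y i = zd i + eta i)
  (heta : forall i, i \in M -> `|eta i| <= eps)
  (z : 'cV[R]_n) (hz : feasible M y eps z) :
  let Aup := [set i in M | y i - z i 0 == eps] in
  let Adown := [set i in M | y i - z i 0 == - eps] in
  let Act := [set i in M | `|y i - z i 0| == eps] in
  is_minimizer M y eps z <->
  exists u : 'cV[R]_(n - 2),
    (forall j, (j \notin M) || (j \in M :\: Act) ->
       ((D2 R n)^T *m u) j 0 = 0) /\
    (forall k, (D2 R n *m z) k 0 != 0 -> u k 0 = Num.sg ((D2 R n *m z) k 0)) /\
    (forall k, `|u k 0| <= 1) /\
    (forall j, j \in Aup -> 0 <= ((D2 R n)^T *m u) j 0) /\
    (forall j, j \in Adown -> ((D2 R n)^T *m u) j 0 <= 0).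
Proof.
move=> Aup Adown Act.
set D := D2 R n.
have hupE : forall j, (j \in Aup) = (j \in M) && (y j - z j 0 == eps).
  by move=> j; rewrite /Aup inE.
have hdnE : forall j, (j \in Adown) = (j \in M) && (y j - z j 0 == - eps).
  by move=> j; rewrite /Adown inE.
have hAct : forall j, (j \in Act) = (j \in Aup) || (j \in Adown).
  move=> j; rewrite /Act inE hupE hdnE; case: (j \in M) => //=.
  set w := y j - z j 0.
  case: (ger0P w) => h.
    case: (eqVneq w (- eps)) => [he|_]; last by rewrite orbF.
    exfalso; lra.
  rewrite eqr_oppLR; case: (eqVneq w eps) => [he|_] //.
  exfalso; lra.
have hdisj : forall j, j \in Aup -> j \notin Adown.
  move=> j; rewrite hupE hdnE => /andP [_ /eqP h1]; apply/negP => /andP [_ /eqP h2].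
  lra.
split.
-
  move=> hmin.
  pose s (k : 'I_(n - 2)) := Num.sg ((D *m z) k 0).
  pose Dn (i j : nat) : R := if j == i then 1 else if j == i.+1 then -2
                             else if j == i.+2 then 1 else 0.
  have hDn : forall (k : 'I_(n - 2)) (j : 'I_n), D k j = Dn k j.
    by move=> k j; rewrite /D /D2 mxE.
  pose ek (k : nat) (v : R) : nat -> R := fun i => if i == k then v else 0.
  pose cD (j : nat) : nat -> R := fun i => Dn i j.
  pose ncD (j : nat) : nat -> R := fun i => - Dn i j.
  pose f1 : 'I_(n - 2) -> list (cstr R) := fun k =>
    if (D *m z) k 0 != 0 then [:: (ek k 1, s k); (ek k (-1), - s k)]
    else [:: (ek k 1, 1); (ek k (-1), 1)].
  pose f2 : 'I_n -> list (cstr R) := fun j =>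
    if j \in Aup then [:: (ncD j, 0)] else if j \in Adown then [:: (cD j, 0)]
    else [:: (cD j, 0); (ncD j, 0)].
  pose S : list (cstr R) := List.flat_map f1 (enum 'I_(n - 2)) ++ List.flat_map f2 (enum 'I_n).
  have inS1 : forall k c, List.In c (f1 k) -> List.In c S.
    move=> k c h; apply/List.in_app_iff; left; apply/List.in_flat_map.
    by exists k; split => //; apply: In_enum.
  have inS2 : forall j c, List.In c (f2 j) -> List.In c S.
    move=> j c h; apply/List.in_app_iff; right; apply/List.in_flat_map.
    by exists j; split => //; apply: In_enum.
  pose inK (d : 'cV[R]_n) := (forall j, j \in M -> y j - z j 0 = eps -> 0 <= d j 0) /\
     (forall j, j \in M -> y j - z j 0 = - eps -> d j 0 <= 0).
  pose F (a : nat -> R) (d : 'cV[R]_n) :=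
    \sum_(k < n - 2) gfun ((D *m z) k 0) (a k + (D *m d) k 0).
  have inK_e : forall (c : R) j, (j \in Aup -> 0 <= c) -> (j \in Adown -> c <= 0) ->
      inK (\col_i (if i == j then c else 0)).
    move=> c j h1 h2; split => i hi he; rewrite mxE; case: (eqVneq i j) => [e|_] //.
      by apply: h1; rewrite -e hupE hi he eqxx.
    by apply: h2; rewrite -e hdnE hi he eqxx.
  have Fcol : forall (c : R) (j : 'I_n) (a : nat -> R), (forall k, a k = - c * Dn k j) ->
      F a (\col_i (if i == j then c else 0)) = 0.
    move=> c j a ha; rewrite /F big1 // => k _.
    by rewrite ecol_mul ha hDn (_ : _ + _ = 0) ?gfun0 //; ring.
  have Hinv : forall c, incone S c -> exists d, inK d /\ F c.1 d <= c.2.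
    move=> c; elim=> [c0 hin | c1 c2 _ [d1 [hK1 hF1]] _ [d2 [hK2 hF2]]
                      | t c0 ht _ [d0 [hK hF]]].
    + move: hin; rewrite List.in_app_iff !List.in_flat_map.
      case=> [[k [_ hk]]|[j [_ hj]]].
      * exists 0; split.
          by split => j _ _; rewrite mxE.
        have F0 : forall v, F (ek k v) 0 = gfun ((D *m z) k 0) v.
          have z0 : forall k : 'I_(n - 2), (D *m (0 : 'cV[R]_n)) k 0 = 0.
            by move=> k'; rewrite mulmx0 mxE.
          move=> v; rewrite /F; under eq_bigr do rewrite z0 addr0.
          rewrite /ek (bigD1 k) //= eqxx big1 ?addr0 // => i hi.
          by rewrite ord_eq_nat (negbTE hi) gfun0.
        move: hk; rewrite /f1 /gfun; case: ifP => hz0 /= [<-|[<-|[]]] /=;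
          rewrite F0 /gfun hz0 /s ?mulr1 ?mulrN1 ?normrN ?normr1 //.
      * move: hj; rewrite /f2; case: ifP => hu.
          move=> [<-|[]] /=; exists (\col_i (if i == j then 1 else 0)); split.
            by apply: inK_e => // hd; move: (hdisj j hu); rewrite hd.
          by rewrite Fcol // => k; rewrite /ncD mulN1r.
        case: ifP => hd.
          move=> [<-|[]] /=; exists (\col_i (if i == j then -1 else 0)); split.
            by apply: inK_e => h; [rewrite h in hu | rewrite oppr_le0].
          by rewrite Fcol // => k; rewrite /cD opprK mul1r.
        move=> [<-|[<-|[]]] /=.
          exists (\col_i (if i == j then -1 else 0)); split.
            by apply: inK_e => h; [move: hu | move: hd]; rewrite h.
          by rewrite Fcol // => k; rewrite /cD opprK mul1r.
        exists (\col_i (if i == j then 1 else 0)); split.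
          by apply: inK_e => h; [move: hu | move: hd]; rewrite h.
        by rewrite Fcol // => k; rewrite /ncD mulN1r.
    + exists (d1 + d2); split.
        split => j hj he; rewrite mxE.
          by have := hK1.1 j hj he; have := hK2.1 j hj he; lra.
        by have := hK1.2 j hj he; have := hK2.2 j hj he; lra.
      apply: le_trans (lerD hF1 hF2); rewrite /F /cadd /= -big_split /=.
      apply: ler_sum => k _; rewrite mulmxDr.
      have e : forall A1 A2 : 'cV[R]_(n - 2), (A1 + A2) k 0 = A1 k 0 + A2 k 0.
        by move=> A1 A2; rewrite mxE.
      rewrite e; exact: gfun_sub4.
    + exists (t *: d0); split.
        split => j hj he; rewrite mxE.
          by rewrite mulr_ge0 // hK.1.
        by rewrite mulr_ge0_le0 // hK.2.
      rewrite /F /cscale /=.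
      have e : forall k, (D *m (t *: d0)) k 0 = t * (D *m d0) k 0.
        by move=> k; rewrite -scalemxAr mxE.
      under eq_bigr do rewrite e gfun_scale //.
      by rewrite -mulr_sumr ler_wpM2l.
  have [|x Hx] := @fm R (n - 2) S.
    move=> a b hab ha; have [d [hK hF]] := Hinv _ hab.
    apply: le_trans hF; rewrite /F.
    under eq_bigr => k _ do rewrite /= (ha k (ltn_ord k)) add0r.
    by case: hK => hK1 hK2; apply: (dir heps hmin hK1 hK2).
  pose u : 'cV[R]_(n - 2) := \col_k x k.
  have hcD : forall j : 'I_n, dot (n - 2) (cD j) x = (D^T *m u) j 0.
    move=> j; rewrite /dot mxE; apply: eq_bigr => k _.
    by rewrite !mxE.
  have hncD : forall j : 'I_n, dot (n - 2) (ncD j) x = - (D^T *m u) j 0.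
    move=> j; rewrite -hcD /dot -sumrN; apply: eq_bigr => k _.
    by rewrite /ncD mulNr.
  have hek : forall (k : 'I_(n - 2)) v, dot (n - 2) (ek k v) x = v * u k 0.
    by move=> k v; rewrite dot_single mxE.
  exists u; split; [|split; [|split; [|split]]].
  + move=> j hj.
    have hu : j \notin Aup.
      apply/negP => h; move: hj; rewrite in_setD hAct h /=.
      by move: h; rewrite hupE => /andP [-> _].
    have hd : j \notin Adown.
      apply/negP => h; move: hj; rewrite in_setD hAct h orbT /=.
      by move: h; rewrite hdnE => /andP [-> _].
    have h1 := Hx (cD j, 0) (inS2 j _ ltac:(by rewrite /f2 (negbTE hu) (negbTE hd); left)).
    have h2 := Hx (ncD j, 0) (inS2 j _ ltac:(by rewrite /f2 (negbTE hu) (negbTE hd); right; left)).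
    move: h1 h2; rewrite /= hcD hncD; lra.
  + move=> k hk.
    have h1 := Hx (ek k 1, s k) (inS1 k _ ltac:(by rewrite /f1 hk; left)).
    have h2 := Hx (ek k (-1), - s k) (inS1 k _ ltac:(by rewrite /f1 hk; right; left)).
    move: h1 h2; rewrite /= !hek /s; lra.
  + move=> k; case: (boolP ((D *m z) k 0 != 0)) => hk.
      have h1 := Hx (ek k 1, s k) (inS1 k _ ltac:(by rewrite /f1 hk; left)).
      have h2 := Hx (ek k (-1), - s k) (inS1 k _ ltac:(by rewrite /f1 hk; right; left)).
      have -> : u k 0 = s k by move: h1 h2; rewrite /= !hek; lra.
      by rewrite /s normr_sg hk.
    have h1 := Hx (ek k 1, 1) (inS1 k _ ltac:(by rewrite /f1 (negbTE hk); left)).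
    have h2 := Hx (ek k (-1), 1) (inS1 k _ ltac:(by rewrite /f1 (negbTE hk); right; left)).
    by rewrite ler_norml; move: h1 h2; rewrite /= !hek => h1 h2; apply/andP; split; lra.
  + move=> j hj.
    have h1 := Hx (ncD j, 0) (inS2 j _ ltac:(by rewrite /f2 hj; left)).
    by move: h1; rewrite /= hncD; lra.
  + move=> j hj.
    have hu := hdisj j; have hnu : j \notin Aup by apply/negP => /hu; rewrite hj.
    have h1 := Hx (cD j, 0) (inS2 j _ ltac:(by rewrite /f2 (negbTE hnu) hj; left)).
    by move: h1; rewrite /= hcD.
-
  move=> [u [h0 [hsg [hn1 [hup hdn]]]]]; split => // z' hz'.
  rewrite /tv2 -/D.
  have e1 : \sum_k `|(D *m z) k 0| = \sum_k u k 0 * (D *m z) k 0.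
    apply: eq_bigr => k _; case: (eqVneq ((D *m z) k 0) 0) => h.
      by rewrite h normr0 mulr0.
    by rewrite (hsg k h) -normrEsg.
  have e2 : \sum_k u k 0 * (D *m z') k 0 <= \sum_k `|(D *m z') k 0|.
    apply: ler_sum => k _; apply: le_trans (ler_norm _) _; rewrite normrM.
    by rewrite -[X in _ <= X]mul1r ler_wpM2r.
  have e3 : \sum_k u k 0 * (D *m z) k 0 <= \sum_k u k 0 * (D *m z') k 0.
    rewrite !dual_id -subr_ge0 -sumrB sumr_ge0 // => j _; rewrite -mulrBr.
    case hjM: (j \in M); last by rewrite h0 ?mul0r // hjM.
    case: (boolP (j \in Act)) => hjA; last by rewrite h0 ?mul0r // in_setD hjA hjM orbT.
    have := hz' j hjM; rewrite ler_norml => /andP [ha hb].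
    rewrite hAct in hjA; case/orP: hjA => hj.
      apply: mulr_ge0; first exact: hup.
      by move: hj; rewrite hupE => /andP [_ /eqP]; lra.
    apply: mulr_le0; first exact: hdn.
    by move: hj; rewrite hdnE => /andP [_ /eqP]; lra.
  by rewrite e1; apply: le_trans e3 e2.
Qed.
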